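(* Let $A$ be a ring and let $Y$ be an infinite subset of $\operatorname{Spec}(A)$ such that every nonzero element of $A$ belongs to only finitely many prime ideals in $Y$. Then $A$ is an integral domain and $\operatorname{Cl}^c(Y)=Y\cup\{(0)\}$.
   Context: Rings are commutative with identity. The constructible topology on $\operatorname{Spec}(A)$ is the coarsest topology in which every set $D(f)=\{\mathfrak p\in\operatorname{Spec}(A): f\notin\mathfrak p\}$, $f\in A$, is clopen; $\operatorname{Cl}^c(Y)$ denotes closure of $Y$ in this topology. *)

(* Defs.v *)
From HB Require Import structures.
From mathcomp Require Import all_boot all_order all_algebra.
From Stdlib Require List.
Set Implicit Arguments. Unset Strict Implicit. Unset Printing Implicit Defensive.
Import GRing.Theory.
Local Open Scope ring_scope.

Record is_prime_ideal (A : comNzRingType) (P : A -> Prop) : Prop := {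
  pi_0 : P 0;
  pi_add : forall x y, P x -> P y -> P (x + y);
  pi_mul : forall a x, P x -> P (a * x);
  pi_proper : ~ P 1;
  pi_prime : forall a b, P (a * b) -> P a \/ P b }.

Record Spec (A : comNzRingType) := mkSpec {
  pt : A -> Prop;
  pt_prime : is_prime_ideal pt }.

Definition D (A : comNzRingType) (f : A) : Spec A -> Prop :=
  fun p => ~ pt p f.

Definition finite_set (T : Type) (S : T -> Prop) : Prop :=
  exists l : list T, forall x, S x -> List.In x l.

Definition is_topology (T : Type) (O : (T -> Prop) -> Prop) : Prop :=
  O (fun _ => True) /\
  (forall U V, O U -> O V -> O (fun x => U x /\ V x)) /\
  (forall F : (T -> Prop) -> Prop, (forall U, F U -> O U) ->
       O (fun x => exists U, F U /\ U x)).

(* Open sets of the constructible topology: the coarsest topology in which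
   every D(f) is clopen (i.e. both D(f) and its complement are open). *)
Definition cons_open (A : comNzRingType) (U : Spec A -> Prop) : Prop :=
  forall O : (Spec A -> Prop) -> Prop,
    is_topology O ->
    (forall f : A, O (D f) /\ O (fun p => ~ D f p)) ->
    O U.

Definition cons_closure (A : comNzRingType) (Y : Spec A -> Prop) : Spec A -> Prop :=
  fun p => forall U, cons_open U -> U p -> exists q, U q /\ Y q.

(* Main.v *)
Require Import Defs.
From HB Require Import structures.
From mathcomp Require Import all_boot all_order all_algebra.
From Stdlib Require Import Classical ProofIrrelevance FunctionalExtensionality PropExtensionality.
From Stdlib Require List.
Local Open Scope ring_scope.
Set Implicit Arguments. Unset Strict Implicit.

Lemma fin_mono (T : Type) (S S' : T -> Prop) :
  (forall x, S x -> S' x) -> finite_set S' -> finite_set S.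
Proof. move=> H [l Hl]; exists l => x /H; exact: Hl. Qed.

Lemma fin_union (T : Type) (S S' : T -> Prop) :
  finite_set S -> finite_set S' -> finite_set (fun x => S x \/ S' x).
Proof.
move=> [l Hl] [l' Hl']; exists (l ++ l')%list => x [/Hl|/Hl'] H;
  apply List.in_or_app; tauto.
Qed.

Lemma spec_eq (A : comNzRingType) (p q : Spec A) : pt p = pt q -> p = q.
Proof.
case: p => p Hp; case: q => q Hq /= E; subst q; f_equal; apply proof_irrelevance.
Qed.

Lemma cons_open_T (A : comNzRingType) : cons_open (fun _ : Spec A => True).
Proof. by move=> O [H _] _. Qed.

Lemma cons_open_I (A : comNzRingType) (U V : Spec A -> Prop) :
  cons_open U -> cons_open V -> cons_open (fun x => U x /\ V x).
Proof.
move=> HU HV O HO HD; have [_ [HI _]] := HO; apply HI; [exact: HU|exact: HV].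
Qed.

Lemma cons_open_D (A : comNzRingType) (f : A) : cons_open (D f).
Proof. by move=> O _ HD; case: (HD f). Qed.

Lemma cons_open_nD (A : comNzRingType) (f : A) : cons_open (fun p => ~ D f p).
Proof. by move=> O _ HD; case: (HD f). Qed.

Lemma separate (A : comNzRingType) (p : Spec A) (l : list (Spec A)) :
  exists U, cons_open U /\ U p /\ (forall q, List.In q l -> q <> p -> ~ U q).
Proof.
elim: l => [|q l [U [HU [Up Hl]]]].
  by exists (fun _ => True); split; [exact: cons_open_T|split].
case: (classic (q = p)) => [Eqp|Nqp].
  exists U; split => //; split => // q' [<-|/Hl //]; by [].
have Npt : pt q <> pt p by move=> E; apply: Nqp; apply: spec_eq.
have [x Hx] : exists x, ~ (pt q x <-> pt p x).
  apply: NNPP => H; apply: Npt; apply: functional_extensionality => x.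
  apply: propositional_extensionality; apply: NNPP => H'; apply: H; by exists x.
case: (classic (pt p x)) => Hpx.
- exists (fun r => U r /\ ~ D x r); split; first by apply: cons_open_I => //; exact: cons_open_nD.
  split; first by split => //; rewrite /D => H; apply H.
  move=> q' [<-|/Hl Hq] Hne [Uq Dq]; last by apply: (Hq Hne).
  apply: Dq => Hqx; apply: Hx; tauto.
- exists (fun r => U r /\ D x r); split; first by apply: cons_open_I => //; exact: cons_open_D.
  split => //.
  move=> q' [<-|/Hl Hq] Hne [Uq Dq]; last by apply: (Hq Hne).
  apply: Dq; apply: NNPP => Hqx; apply: Hx; tauto.
Qed.

Theorem lemma2p9 (A : comNzRingType) (Y : Spec A -> Prop) :
  ~ finite_set Y ->
  (forall f : A, f != 0 -> finite_set (fun p => Y p /\ pt p f)) ->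
  (forall a b : A, a * b = 0 -> a = 0 \/ b = 0) /\
  (forall p : Spec A, cons_closure Y p <-> (Y p \/ pt p = (fun x => x = 0))).
Proof.
move=> Yinf Hfin; split.
  move=> a b Hab; apply: NNPP => H.
  have Ha : a != 0 by apply/eqP => E; apply: H; left.
  have Hb : b != 0 by apply/eqP => E; apply: H; right.
  apply: Yinf; have F := @fin_union _ _ _ (Hfin a Ha) (Hfin b Hb); apply: (@fin_mono _ _ _ _ F) => q Yq.
  have Hq := pt_prime q.
  have : pt q (a * b) by rewrite Hab; exact: pi_0.
  by case/(pi_prime Hq) => ?; [left|right].
move=> p; split.
- move=> Hcl; case: (classic (Y p)) => Yp; first by left.
  right; apply: functional_extensionality => x; apply: propositional_extensionality.
  have Hp := pt_prime p.
  split; last by move=> ->; exact: pi_0.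
  move=> px; apply: NNPP => nx.
  have nx' : x != 0 by apply/eqP.
  have [l Hl] := Hfin x nx'.
  have [U [HU [Up Hsep]]] := @separate A p l.
  have [q [[Uq qx] Yq]] := Hcl (fun r => U r /\ ~ D x r)
     (cons_open_I HU (cons_open_nD x)) (conj Up (fun H => H px)).
  apply: (Hsep q (Hl q (conj Yq (NNPP _ qx)))) => //.
  by move=> E; apply: Yp; rewrite -E.
- case=> [Yp|Hp0] U HU Up; first by exists p.
  pose GO := fun V : Spec A -> Prop => forall r, V r -> pt r = (fun x => x = 0) ->
     finite_set (fun q => Y q /\ ~ V q).
  have HG : GO U.
    apply: (HU GO); last first.
      move=> f; split.
      + move=> r Dr Hr.
        have nf : f != 0 by apply/eqP => E; apply: Dr; rewrite Hr /=.
        apply: (@fin_mono _ _ _ _ (Hfin f nf)) => q [Yq nD]; split => //.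
        exact: NNPP.
      + move=> r nDr Hr.
        have E : f = 0.
          have := NNPP _ nDr; rewrite Hr /=; exact.
        exists nil => q [_ H]; apply: H => H'; apply: H'; rewrite E.
        exact: (pi_0 (pt_prime q)).
    split; first by move=> r _ _; exists nil => q [_ []].
    split.
      move=> V W HV HW r [Vr Wr] Hr.
      have F := @fin_union _ _ _ (HV r Vr Hr) (HW r Wr Hr); apply: (@fin_mono _ _ _ _ F) => q [Yq H].
      by case: (classic (V q)) => Vq; [right; split => // Wq; apply: H|left].
    move=> F HF r [V [FV Vr]] Hr.
    apply: (@fin_mono _ _ _ _ (HF V FV r Vr Hr)) => q [Yq H]; split => // Vq; apply: H.
    by exists V.
  have [l Hl] := HG p Up Hp0.
  apply: NNPP => H; apply: Yinf; exists l => q Yq; apply: Hl; split => // Uq.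
  by apply: H; exists q.
Qed.
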